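(* Let $C,w,n_{\max}>0$ and $\epsilon\in(0,10^{-3})$. There is $R_2>0$ depending on $C,w,n_{\max}$ such that if $I$ is an interval of length $R\ge R_2$ the following holds. Suppose $\mathcal{P}=\{J_1,\dots,J_{n_0},J^{(1)}_1,\dots,J^{(1)}_{n_1},\dots,J^{(m)}_1,\dots,J^{(m)}_{n_m}\}$ is a partition of $I$ into intervals with disjoint interiors, with $n_i\le n_{\max}$ for all $i\ge1$, and let $\mathcal{P}_b=\{J^{(p)}_i:1\le p\le m,1\le i\le n_p\}$. Suppose (1) $\sum_{J\in\mathcal{P}_b}l(J)\ge(1-\epsilon)R$; and (2) for any $J^{(p)}_i,J^{(q)}_j\in\mathcal{P}_b$ with $p\ne q$, $$d(J^{(p)}_i,J^{(q)}_j)\ge\max\Big(R_2,\;C\min\big(l(J^{(p)}_i),l(J^{(q)}_j)\big)^{1+w}\Big).$$ Then there exists $J^{(j_0)}_{i_0}\in\mathcal{P}_b$ with $l(J^{(j_0)}_{i_0})\ge\frac{1}{32n_{\max}}R$ and $\sum_{i=1}^{n_{j_0}}l(J^{(j_0)}_i)\ge\frac34R$.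
   Context: $l(J)$ is the length of the interval $J$, and $d(J,J')$ is the distance between two disjoint intervals (the infimum of $|s-t|$, $s\in J$, $t\in J'$). *)

(* Defs.v *)
From Stdlib Require Import Reals.
Open Scope R_scope.

(* A (compact) interval [a,b] of the real line, represented by its endpoints
   (fst = left endpoint a, snd = right endpoint b), with a <= b required
   separately where used. *)
Definition interval := (R * R)%type.

Definition wf_interval (J : interval) : Prop := fst J <= snd J.

Definition len (J : interval) : R := snd J - fst J.

Definition mem (x : R) (J : interval) : Prop := fst J <= x <= snd J.

Definition mem_int (x : R) (J : interval) : Prop := fst J < x < snd J.

(* d(J,J') = inf { |s - t| : s in J, t in J' } for J, J' nonempty compact
   intervals; written out explicitly. *)
Definition idist (J J' : interval) : R :=
  Rmax 0 (Rmax (fst J' - snd J) (fst J - snd J')).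

Fixpoint sumR (n : nat) (f : nat -> R) : R :=
  match n with
  | O => 0
  | S k => sumR k f + f k
  end.

(* Indices of the members of the partition P:
   Free i  stands for J_{i+1}          (0 <= i < n0),
   Bad p i stands for J^{(p+1)}_{i+1}  (0 <= p < m, 0 <= i < n_{p+1}). *)
Inductive pidx : Type :=
| Free (i : nat)
| Bad (p i : nat).

Definition valid_idx (n0 m : nat) (n : nat -> nat) (k : pidx) : Prop :=
  match k with
  | Free i => (i < n0)%nat
  | Bad p i => (p < m)%nat /\ (i < n p)%nat
  end.

Definition get (J0 : nat -> interval) (Jb : nat -> nat -> interval)
  (k : pidx) : interval :=
  match k with
  | Free i => J0 i
  | Bad p i => Jb p i
  end.

Definition is_partition (I : interval) (n0 m : nat) (n : nat -> nat)
  (J0 : nat -> interval) (Jb : nat -> nat -> interval) : Prop :=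
  (forall k, valid_idx n0 m n k -> wf_interval (get J0 Jb k)) /\
  (forall x, mem x I <->
     exists k, valid_idx n0 m n k /\ mem x (get J0 Jb k)) /\
  (forall k k', valid_idx n0 m n k -> valid_idx n0 m n k' -> k <> k' ->
     forall x, ~ (mem_int x (get J0 Jb k) /\ mem_int x (get J0 Jb k'))).

(* x^y for x >= 0, y > 0, with the convention 0^y = 0 (Stdlib's Rpower
   would give Rpower 0 y = 1). *)
Definition rpow (x y : R) : R :=
  match Rle_dec x 0 with
  | left _ => 0
  | right _ => Rpower x y
  end.

(* Main.v *)
Require Import Defs.
From Stdlib Require Import Reals Lra Lia List ZArith.
Open Scope R_scope.

Definition lsum (f : nat -> R) (l : list nat) : R :=
  fold_right (fun p acc => f p + acc) 0 l.

Lemma lsum_app f l1 l2 : lsum f (l1 ++ l2) = lsum f l1 + lsum f l2.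
Proof. induction l1; simpl; [lra|]. rewrite IHl1; lra. Qed.

Lemma sumR_lsum m f : sumR m f = lsum f (seq 0 m).
Proof.
  induction m; [reflexivity|].
  rewrite seq_S, lsum_app, <- IHm. simpl. lra.
Qed.

Lemma lsum_filter_split f g l :
  lsum f l = lsum f (filter g l) + lsum f (filter (fun x => negb (g x)) l).
Proof. induction l; simpl; [lra|]. destruct (g a); simpl; rewrite IHl; lra. Qed.

Lemma lsum_le f h l : (forall x, In x l -> f x <= h x) -> lsum f l <= lsum h l.
Proof.
  induction l; simpl; intros H; [lra|].
  assert (f a <= h a) by auto. assert (lsum f l <= lsum h l) by auto. lra.
Qed.

Lemma lsum_zero f l : (forall x, In x l -> f x = 0) -> lsum f l = 0.
Proof.
  induction l; simpl; intros H; [lra|].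
  rewrite H by auto. rewrite IHl by auto. lra.
Qed.

Lemma lsum_scal c f l : lsum (fun x => c * f x) l = c * lsum f l.
Proof. induction l; simpl; [lra|]. rewrite IHl; lra. Qed.

Lemma lsum_plus f g l : lsum (fun x => f x + g x) l = lsum f l + lsum g l.
Proof. induction l; simpl; [lra|]. rewrite IHl; lra. Qed.

Lemma lsum_ind (g : nat -> bool) c l :
  lsum (fun x => if g x then c else 0) l = c * INR (length (filter g l)).
Proof.
  induction l; [simpl; lra|]. cbn [lsum fold_right filter].
  fold (lsum (fun x => if g x then c else 0) l). rewrite IHl.
  destruct (g a); [cbn [length]; rewrite S_INR; lra | lra].
Qed.

Lemma lsum_const c l : lsum (fun _ => c) l = c * INR (length l).
Proof.
  induction l; [simpl; lra|]. cbn [lsum fold_right length].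
  fold (lsum (fun _ => c) l). rewrite IHl. rewrite S_INR. lra.
Qed.

Lemma lsum_sumR J h l :
  lsum (fun x => sumR J (fun j => h x j)) l = sumR J (fun j => lsum (fun x => h x j) l).
Proof.
  induction J; simpl.
  - apply lsum_zero; auto.
  - rewrite lsum_plus. rewrite IHJ. reflexivity.
Qed.

Lemma sumR_le J f g : (forall j, (j < J)%nat -> f j <= g j) -> sumR J f <= sumR J g.
Proof.
  induction J; simpl; intros H; [lra|].
  assert (f J <= g J) by (apply H; lia).
  assert (sumR J f <= sumR J g) by (apply IHJ; intros; apply H; lia). lra.
Qed.

Lemma sumR_scal c J f : sumR J (fun j => c * f j) = c * sumR J f.
Proof. induction J; simpl; [lra|]. rewrite IHJ; lra. Qed.

Lemma geom_sum r J : 0 <= r < 1 -> sumR J (fun j => r ^ j) <= / (1 - r).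
Proof.
  intros Hr.
  assert (E : forall J, sumR J (fun j => r ^ j) * (1 - r) = 1 - r ^ J).
  { induction J0; simpl; [lra|]. rewrite Rmult_plus_distr_r, IHJ0. ring. }
  assert (0 <= r ^ J) by (apply pow_le; lra).
  assert (0 < 1 - r) by lra.
  apply (Rmult_le_reg_r (1 - r)); auto. rewrite E. rewrite Rinv_l by lra. lra.
Qed.

Lemma lsum_remove f l A : NoDup l -> In A l ->
  lsum f l = f A + lsum f (filter (fun x => negb (Nat.eqb x A)) l).
Proof.
  induction l; simpl; intros Hn Hi; [contradiction|].
  inversion Hn; subst.
  destruct Hi as [<- | Hi].
  - rewrite Nat.eqb_refl. simpl. f_equal.
    f_equal. symmetry. clear -H1. induction l; simpl; auto.
    destruct (Nat.eqb_spec a0 a); [subst; exfalso; apply H1; simpl; auto|].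
    simpl. f_equal. apply IHl. intros Hc; apply H1; simpl; auto.
  - destruct (Nat.eqb_spec a A); [subst; contradiction|]. simpl.
    rewrite (IHl H2 Hi). lra.
Qed.

Fixpoint argmax (f : nat -> R) (k : nat) : nat :=
  match k with
  | O => O
  | S k' => match k' with
            | O => O
            | _ => if Rle_dec (f (argmax f k')) (f k') then k' else argmax f k'
            end
  end.

Lemma argmax_spec f k : (0 < k)%nat ->
  (argmax f k < k)%nat /\ forall j, (j < k)%nat -> f j <= f (argmax f k).
Proof.
  induction k; intros Hk; [lia|].
  destruct k.
  - simpl. split; [lia|]. intros j Hj. assert (j = O) by lia. subst. lra.
  - destruct IHk as [H1 H2]; [lia|].
    change (argmax f (S (S k))) with
      (if Rle_dec (f (argmax f (S k))) (f (S k)) then S k else argmax f (S k)).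
    destruct (Rle_dec (f (argmax f (S k))) (f (S k))) as [Hle|Hle].
    + split; [lia|]. intros j Hj. destruct (Nat.eq_dec j (S k)); [subst; lra|].
      specialize (H2 j ltac:(lia)). lra.
    + split; [lia|]. intros j Hj. destruct (Nat.eq_dec j (S k)); [subst; lra|].
      apply H2; lia.
Qed.

Lemma idist_split J J' D : 0 < D -> idist J J' >= D ->
  fst J' - snd J >= D \/ fst J - snd J' >= D.
Proof.
  unfold idist, Rmax. intros HD H.
  repeat destruct Rle_dec; lra.
Qed.

Lemma sep_count (F : nat -> interval) D : 0 < D -> forall n l a b,
  (length l < n)%nat -> NoDup l -> a <= b + D ->
  (forall p, In p l -> a <= fst (F p) /\ fst (F p) <= snd (F p) /\ snd (F p) <= b) ->
  (forall p q, In p l -> In q l -> p <> q -> idist (F p) (F q) >= D) ->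
  D * INR (length l) <= b - a + D.
Proof.
  intros HD n. induction n; intros l a b Hlen Hnd Hab Hin Hsep; [lia|].
  destruct l as [|p l'].
  - simpl. lra.
  - inversion Hnd; subst.
    set (g := fun q => if Rlt_dec (snd (F q)) (fst (F p)) then true else false).
    set (L := filter g l'). set (Rr := filter (fun x => negb (g x)) l').
    assert (Hl : (length L + length Rr)%nat = length l') by apply filter_length.
    destruct (Hin p ltac:(simpl; auto)) as [Hp1 [Hp2 Hp3]].
    assert (HL : D * INR (length L) <= (fst (F p) - D) - a + D).
    { apply IHn.
      - pose proof (filter_length_le g l'). simpl in Hlen. unfold L. lia.
      - apply NoDup_filter; auto.
      - lra.
      - intros q Hq. unfold L in Hq. apply filter_In in Hq as [Hq Hg].
        destruct (Hin q ltac:(simpl; auto)) as [Hq1 [Hq2 Hq3]].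
        unfold g in Hg. destruct Rlt_dec as [Hlt|]; [|discriminate].
        assert (q <> p) by (intros ->; contradiction).
        pose proof (Hsep p q ltac:(simpl;auto) ltac:(simpl;auto) ltac:(auto)) as Hs.
        apply idist_split in Hs; auto. lra.
      - intros q q' Hq Hq' Hne. unfold L in Hq, Hq'.
        apply filter_In in Hq as [Hq _]. apply filter_In in Hq' as [Hq' _].
        apply Hsep; simpl; auto. }
    assert (HR : D * INR (length Rr) <= b - (snd (F p) + D) + D).
    { apply IHn.
      - pose proof (filter_length_le (fun x => negb (g x)) l'). simpl in Hlen. unfold Rr. lia.
      - apply NoDup_filter; auto.
      - lra.
      - intros q Hq. unfold Rr in Hq. apply filter_In in Hq as [Hq Hg].
        destruct (Hin q ltac:(simpl; auto)) as [Hq1 [Hq2 Hq3]].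
        unfold g in Hg. destruct Rlt_dec as [Hlt|Hlt]; [discriminate|].
        assert (q <> p) by (intros ->; contradiction).
        pose proof (Hsep p q ltac:(simpl;auto) ltac:(simpl;auto) ltac:(auto)) as Hs.
        apply idist_split in Hs; auto. lra.
      - intros q q' Hq Hq' Hne. unfold Rr in Hq, Hq'.
        apply filter_In in Hq as [Hq _]. apply filter_In in Hq' as [Hq' _].
        apply Hsep; simpl; auto. }
    cbn [length]. rewrite S_INR, <- Hl, plus_INR. lra.
Qed.

Definition gtb (t x : R) : bool := if Rlt_dec t x then true else false.

Lemma layer t0 J x : 0 < t0 ->
  Rmin x (t0 * 2 ^ J) <= t0 + sumR J (fun j => if gtb (t0 * 2 ^ j) x then t0 * 2 ^ j else 0).
Proof.
  intros Ht. induction J.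
  - simpl. unfold Rmin. destruct Rle_dec; lra.
  - cbn [sumR]. unfold gtb at 2. destruct Rlt_dec as [Hlt|Hlt].
    + assert (Rmin x (t0 * 2 ^ J) = t0 * 2 ^ J) by (unfold Rmin; destruct Rle_dec; lra).
      assert (Rmin x (t0 * 2 ^ S J) <= t0 * 2 ^ S J) by apply Rmin_r.
      simpl pow in *. lra.
    + assert (Rmin x (t0 * 2 ^ J) = x) by (unfold Rmin; destruct Rle_dec; lra).
      assert (Rmin x (t0 * 2 ^ S J) <= x) by apply Rmin_l. lra.
Qed.

Lemma Rpower_pos x y : 0 < Rpower x y.
Proof. unfold Rpower. apply exp_pos. Qed.

Lemma Rpower_geom t0 w j : 0 < t0 ->
  Rpower (t0 * 2 ^ j) w = Rpower t0 w * Rpower 2 w ^ j.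
Proof.
  intros Ht. induction j.
  - simpl. rewrite Rmult_1_r. ring.
  - simpl pow. replace (t0 * (2 * 2 ^ j)) with ((t0 * 2 ^ j) * 2) by ring.
    rewrite <- Rpower_mult_distr.
    + rewrite IHj. ring.
    + apply Rmult_lt_0_compat; auto. apply pow_lt; lra.
    + lra.
Qed.

Lemma pow2_ge J : INR J <= 2 ^ J.
Proof.
  induction J; [simpl; lra|]. rewrite S_INR. simpl pow.
  assert (1 <= 2 ^ J) by (apply pow_R1_Rle; lra). lra.
Qed.

Lemma core (F : nat -> interval) (L : list nat) (A : nat) (a R C w R2 t0 : R) :
  0 < C -> 0 < w -> 0 < R2 -> 0 < t0 -> 0 <= R ->
  NoDup L -> ~ In A L ->
  (forall p, In p (A :: L) -> a <= fst (F p) /\ fst (F p) <= snd (F p) /\ snd (F p) <= a + R) ->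
  (forall q, In q L -> len (F q) <= len (F A)) ->
  (forall p q, In p (A :: L) -> In q (A :: L) -> p <> q ->
     idist (F p) (F q) >= Rmax R2 (C * rpow (Rmin (len (F p)) (len (F q))) (1 + w))) ->
  lsum (fun q => len (F q)) L <=
    t0 * (R / R2) + R / (C * Rpower t0 w) * / (1 - / Rpower 2 w).
Proof.
  intros HC Hw HR2 Ht0 HR Hnd HA Hin Hmax Hsep.
  set (s := Rpower 2 w).
  assert (Hs : 1 < s).
  { unfold s. rewrite <- (Rpower_O 2) by lra. apply Rpower_lt; lra. }
  set (X := Rpower t0 w).
  assert (HX : 0 < X) by apply Rpower_pos.
  destruct (archimed (R / t0)) as [Harch _].
  set (J := Z.to_nat (up (R / t0))).
  assert (HJ : R <= t0 * 2 ^ J).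
  { assert (R / t0 <= INR J).
    { unfold J. rewrite INR_IZR_INZ. rewrite Z2Nat.id.
      - lra.
      - apply le_IZR. assert (0 <= R / t0) by (unfold Rdiv; apply Rmult_le_pos; [lra | left; apply Rinv_0_lt_compat; lra]). lra. }
    pose proof (pow2_ge J).
    assert (R / t0 <= 2 ^ J) by lra.
    unfold Rdiv in *. apply (Rmult_le_compat_l t0) in H1; [|lra].
    rewrite <- Rmult_assoc, Rinv_r_simpl_m in H1 by lra. lra. }
  (* step 1: layer cake *)
  set (ind := fun j q => if gtb (t0 * 2 ^ j) (len (F q)) then t0 * 2 ^ j else 0).
  assert (H1 : lsum (fun q => len (F q)) L <=
               lsum (fun q => t0 + sumR J (fun j => ind j q)) L).
  { apply lsum_le. intros q Hq.
    destruct (Hin q ltac:(simpl; auto)) as [Hq1 [Hq2 Hq3]].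
    assert (len (F q) <= t0 * 2 ^ J) by (unfold len; lra).
    pose proof (layer t0 J (len (F q)) Ht0).
    assert (Rmin (len (F q)) (t0 * 2 ^ J) = len (F q)) by (unfold Rmin; destruct Rle_dec; lra).
    unfold ind. lra. }
  rewrite lsum_plus, lsum_const, lsum_sumR in H1.
  assert (H2 : R2 * INR (length (A :: L)) <= (a + R) - a + R2).
  { apply (sep_count F R2 HR2 (S (length (A :: L)))); auto.
    - constructor; auto.
    - lra.
    - intros p q Hp Hq Hne. specialize (Hsep p q Hp Hq Hne).
      pose proof (Rmax_l R2 (C * rpow (Rmin (len (F p)) (len (F q))) (1 + w))). lra. }
  cbn [length] in H2. rewrite S_INR in H2.
  assert (H2' : t0 * INR (length L) <= t0 * (R / R2)).
  { apply Rmult_le_compat_l; [lra|].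
    apply (Rmult_le_reg_l R2); auto. unfold Rdiv. rewrite <- Rmult_assoc, Rinv_r_simpl_m by lra.
    lra. }
  assert (H3 : forall j, (j < J)%nat ->
     lsum (fun q => ind j q) L <= R / (C * X) * (/ s) ^ j).
  { intros j _. set (t := t0 * 2 ^ j).
    assert (Ht : 0 < t) by (unfold t; apply Rmult_lt_0_compat; auto; apply pow_lt; lra).
    unfold ind. fold t. rewrite lsum_ind.
    set (Lj := filter (fun x => gtb t (len (F x))) L).
    assert (HLj : forall q, In q Lj -> In q L /\ t < len (F q)).
    { intros q Hq. unfold Lj in Hq. apply filter_In in Hq as [Hq Hg].
      unfold gtb in Hg. destruct Rlt_dec; [auto|discriminate]. }
    set (D := C * (t * Rpower t w)).
    assert (HD : 0 < D).
    { unfold D. apply Rmult_lt_0_compat; auto. apply Rmult_lt_0_compat; auto. apply Rpower_pos. }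
    assert (Hc : D * INR (length (A :: Lj)) <= (a + R) - a + D).
    { apply (sep_count F D HD (S (length (A :: Lj)))); auto.
      - constructor.
        + intros Hc. apply HLj in Hc as [Hc _]. contradiction.
        + apply NoDup_filter; auto.
      - lra.
      - intros p Hp. apply Hin. destruct Hp as [<-|Hp]; [simpl; auto|].
        right. apply HLj in Hp as [Hp _]; auto.
      - intros p q Hp Hq Hne.
        assert (Hbig : forall r, In r (A :: Lj) -> (exists r', In r' Lj) -> t < len (F r)).
        { intros r Hr [r' Hr']. destruct Hr as [<-|Hr].
          - apply HLj in Hr' as [Hr1 Hr2]. specialize (Hmax r' Hr1). lra.
          - apply HLj in Hr as [_ Hr]; auto. }
        assert (Hex : exists r', In r' Lj).
        { destruct Hp as [<-|Hp]; [|eauto]. destruct Hq as [<-|Hq]; [contradiction|eauto]. }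
        pose proof (Hbig p Hp Hex). pose proof (Hbig q Hq Hex).
        assert (Hmn : t < Rmin (len (F p)) (len (F q))) by (apply Rmin_glb_lt; auto).
        assert (Hsp : In p (A :: L)).
        { destruct Hp as [<-|Hp]; [simpl; auto|]. right. apply HLj in Hp as [Hp _]; auto. }
        assert (Hsq : In q (A :: L)).
        { destruct Hq as [<-|Hq]; [simpl; auto|]. right. apply HLj in Hq as [Hq _]; auto. }
        specialize (Hsep p q Hsp Hsq Hne).
        pose proof (Rmax_r R2 (C * rpow (Rmin (len (F p)) (len (F q))) (1 + w))).
        assert (Hrp : rpow (Rmin (len (F p)) (len (F q))) (1 + w) >= t * Rpower t w).
        { unfold rpow. destruct Rle_dec; [lra|].
          rewrite <- (Rpower_1 t) at 1 by lra. rewrite <- Rpower_plus.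
          apply Rle_ge, Rle_Rpower_l; lra. }
        unfold D. apply Rmult_ge_compat_l with (r := C) in Hrp; lra. }
    cbn [length] in Hc. rewrite S_INR in Hc.
    assert (HN : D * INR (length Lj) <= R) by lra.
    assert (Hpw : Rpower t w = X * s ^ j) by (unfold t, X, s; apply Rpower_geom; auto).
    assert (Hsj : 0 < s ^ j) by (apply pow_lt; lra).
    rewrite pow_inv. unfold D in HN. rewrite Hpw in HN.
    apply (Rmult_le_reg_l (C * X * s ^ j)).
    { apply Rmult_lt_0_compat; auto. apply Rmult_lt_0_compat; auto. }
    replace (C * X * s ^ j * (R / (C * X) * / s ^ j)) with R by (field; repeat split; lra).
    replace (C * X * s ^ j * (t * INR (length Lj))) with (C * (t * (X * s ^ j)) * INR (length Lj)) by ring.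
    exact HN. }
  assert (H4 : sumR J (fun j => lsum (fun q => ind j q) L) <= R / (C * X) * / (1 - / s)).
  { eapply Rle_trans. { apply sumR_le. exact H3. }
    rewrite sumR_scal. apply Rmult_le_compat_l.
    - unfold Rdiv. apply Rmult_le_pos; [lra|]. left. apply Rinv_0_lt_compat.
      apply Rmult_lt_0_compat; auto.
    - apply geom_sum. split.
      + left. apply Rinv_0_lt_compat. lra.
      + rewrite <- Rinv_1. apply Rinv_lt_contravar; lra. }
  unfold X, s in *. lra.
Qed.

Lemma sumR_bound k f M : (forall i, (i < k)%nat -> f i <= M) -> sumR k f <= INR k * M.
Proof.
  induction k; intros H; simpl sumR; [simpl; lra|].
  rewrite S_INR. assert (f k <= M) by (apply H; lia).
  assert (sumR k f <= INR k * M) by (apply IHk; intros; apply H; lia). lra.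
Qed.

Theorem lemma5p3 :
  forall (C w : R) (nmax : nat),
    0 < C -> 0 < w -> (0 < nmax)%nat ->
    exists R2 : R, 0 < R2 /\
      forall (eps : R), 0 < eps < / 1000 ->
      forall (x0 Rl : R), R2 <= Rl ->
      forall (n0 m : nat) (n : nat -> nat)
             (J0 : nat -> interval) (Jb : nat -> nat -> interval),
        is_partition (x0, x0 + Rl) n0 m n J0 Jb ->
        (forall p, (p < m)%nat -> (n p <= nmax)%nat) ->
        sumR m (fun p => sumR (n p) (fun i => len (Jb p i))) >= (1 - eps) * Rl ->
        (forall p i q j, (p < m)%nat -> (i < n p)%nat ->
                         (q < m)%nat -> (j < n q)%nat -> p <> q ->
           idist (Jb p i) (Jb q j) >=
             Rmax R2 (C * rpow (Rmin (len (Jb p i)) (len (Jb q j))) (1 + w))) ->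
        exists j0 i0, (j0 < m)%nat /\ (i0 < n j0)%nat /\
          len (Jb j0 i0) >= / (32 * INR nmax) * Rl /\
          sumR (n j0) (fun i => len (Jb j0 i)) >= 3 / 4 * Rl.
Proof.
  intros C w nmax HC Hw Hn.
  set (s := Rpower 2 w).
  assert (Hs : 1 < s).
  { unfold s. rewrite <- (Rpower_O 2) by lra. apply Rpower_lt; lra. }
  set (K := / (1 - / s)).
  assert (HK : 0 < K).
  { unfold K. apply Rinv_0_lt_compat.
    assert (/ s < 1) by (rewrite <- Rinv_1; apply Rinv_lt_contravar; lra). lra. }
  assert (Hnm : 1 <= INR nmax) by (apply (le_INR 1); lia).
  set (X := 10 * INR nmax * K / C).
  assert (HX : 0 < X).
  { unfold X. unfold Rdiv. apply Rmult_lt_0_compat; [|apply Rinv_0_lt_compat; lra].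
    apply Rmult_lt_0_compat; lra. }
  set (t0 := Rpower X (/ w)).
  assert (Ht0 : 0 < t0) by apply Rpower_pos.
  assert (HtX : Rpower t0 w = X).
  { unfold t0. rewrite Rpower_mult. rewrite Rinv_l by lra. apply Rpower_1; auto. }
  set (R2 := 10 * INR nmax * t0 + 1).
  assert (HR2 : 0 < R2) by (unfold R2; nra).
  exists R2. split; [exact HR2|].
  intros eps Heps x0 Rl HRl n0 m n J0 Jb Hpart Hnmax Hsum Hsep.
  destruct Hpart as [Hwf [Hcov _]].
  assert (Hins : forall p i, (p < m)%nat -> (i < n p)%nat ->
    x0 <= fst (Jb p i) /\ fst (Jb p i) <= snd (Jb p i) /\ snd (Jb p i) <= x0 + Rl).
  { intros p i Hp Hi.
    assert (Hv : valid_idx n0 m n (Bad p i)) by (simpl; auto).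
    pose proof (Hwf _ Hv) as Hw1. unfold wf_interval in Hw1. simpl in Hw1.
    assert (H1 : mem (fst (Jb p i)) (x0, x0 + Rl)).
    { apply Hcov. exists (Bad p i). split; auto. unfold mem; simpl; lra. }
    assert (H2 : mem (snd (Jb p i)) (x0, x0 + Rl)).
    { apply Hcov. exists (Bad p i). split; auto. unfold mem; simpl; lra. }
    unfold mem in H1, H2; simpl in H1, H2. lra. }
  set (Sg := fun p => sumR (n p) (fun i => len (Jb p i))) in *.
  set (am := fun p => argmax (fun i => len (Jb p i)) (n p)).
  set (rep := fun p => Jb p (am p)).
  assert (Ham : forall p, (0 < n p)%nat ->
     (am p < n p)%nat /\ forall i, (i < n p)%nat -> len (Jb p i) <= len (rep p)).
  { intros p Hp. apply (argmax_spec (fun i => len (Jb p i)) (n p) Hp). }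
  assert (HS : forall p, (p < m)%nat -> (0 < n p)%nat -> Sg p <= INR nmax * len (rep p)).
  { intros p Hp Hnp. destruct (Ham p Hnp) as [Ha Hb].
    eapply Rle_trans. { apply sumR_bound. exact Hb. }
    destruct (Hins p (am p) Hp Ha) as [_ [Hl _]].
    apply Rmult_le_compat_r; [unfold rep, len; lra|]. apply le_INR; auto. }
  assert (HRpos : 0 < Rl) by lra.
  destruct m as [|m'].
  { simpl in Hsum. exfalso. assert (0 < (1 - eps) * Rl) by nra. lra. }
  set (m := Datatypes.S m') in *.
  set (val := fun p => if Nat.eqb (n p) 0 then -1 else len (rep p)).
  set (A := argmax val m).
  destruct (argmax_spec val m ltac:(unfold m; lia)) as [HAm HAmax]. fold A in HAm, HAmax.
  assert (HnA : (0 < n A)%nat).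
  { destruct (Nat.eq_dec (n A) 0) as [HA0|]; [|lia]. exfalso.
    assert (Hall : forall q, (q < m)%nat -> n q = 0%nat).
    { intros q Hq. destruct (Nat.eq_dec (n q) 0) as [|Hq0]; auto. exfalso.
      specialize (HAmax q Hq). unfold val in HAmax. rewrite HA0 in HAmax. simpl in HAmax.
      destruct (Nat.eqb_spec (n q) 0); [contradiction|].
      destruct (Hins q (am q) Hq ltac:(apply Ham; lia)) as [_ [Hl _]].
      unfold rep, len in HAmax. lra. }
    assert (sumR m Sg = 0).
    { rewrite sumR_lsum. apply lsum_zero. intros q Hq. apply in_seq in Hq.
      unfold Sg. rewrite Hall by lia. reflexivity. }
    assert (0 < (1 - eps) * Rl) by nra. lra. }
  set (L := filter (fun q => Nat.ltb 0 (n q)) (filter (fun q => negb (Nat.eqb q A)) (seq 0 m))).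
  assert (HL : forall q, In q L -> (q < m)%nat /\ (0 < n q)%nat /\ q <> A).
  { intros q Hq. unfold L in Hq. apply filter_In in Hq as [Hq H1].
    apply filter_In in Hq as [Hq H2]. apply in_seq in Hq.
    apply Nat.ltb_lt in H1. destruct (Nat.eqb_spec q A); [discriminate|]. lia. }
  assert (Htot : sumR m Sg = Sg A + lsum Sg L).
  { rewrite sumR_lsum. rewrite (lsum_remove Sg (seq 0 m) A).
    - f_equal. rewrite (lsum_filter_split Sg (fun q => Nat.ltb 0 (n q))). fold L.
      rewrite (lsum_zero Sg (filter _ _)); [lra|].
      intros q Hq. apply filter_In in Hq as [_ Hq].
      destruct (Nat.ltb_spec 0 (n q)); [discriminate|].
      unfold Sg. replace (n q) with 0%nat by lia. reflexivity.
    - apply seq_NoDup.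
    - apply in_seq. lia. }
  assert (Hcore := core rep L A x0 Rl C w R2 t0 HC Hw HR2 Ht0 ltac:(lra)).
  assert (Hbound : lsum (fun q => len (rep q)) L <= t0 * (Rl / R2) + Rl / (C * Rpower t0 w) * / (1 - / Rpower 2 w)).
  { apply Hcore.
    - unfold L. apply NoDup_filter, NoDup_filter, seq_NoDup.
    - intros Hc. apply HL in Hc as [_ [_ Hc]]. contradiction.
    - intros p Hp. destruct Hp as [<-|Hp].
      + apply Hins; auto. apply Ham; auto.
      + destruct (HL p Hp) as [H1 [H2 _]]. apply Hins; auto. apply Ham; auto.
    - intros q Hq. destruct (HL q Hq) as [H1 [H2 _]]. specialize (HAmax q H1).
      unfold val in HAmax.
      destruct (Nat.eqb_spec (n q) 0); [lia|]. destruct (Nat.eqb_spec (n A) 0); [lia|]. lra.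
    - intros p q Hp Hq Hne.
      assert (Hp' : (p < m)%nat /\ (0 < n p)%nat).
      { destruct Hp as [<-|Hp]; [auto|]. destruct (HL p Hp) as [? [? _]]; auto. }
      assert (Hq' : (q < m)%nat /\ (0 < n q)%nat).
      { destruct Hq as [<-|Hq]; [auto|]. destruct (HL q Hq) as [? [? _]]; auto. }
      unfold rep. apply Hsep; try tauto; apply Ham; tauto. }
  rewrite HtX in Hbound. fold s K in Hbound.
  assert (HSL : lsum Sg L <= INR nmax * lsum (fun q => len (rep q)) L).
  { rewrite <- lsum_scal. apply lsum_le. intros q Hq. destruct (HL q Hq) as [? [? _]]. auto. }
  assert (Hb1 : INR nmax * (t0 * (Rl / R2)) <= Rl / 10).
  { unfold R2. unfold Rdiv.
    replace (INR nmax * (t0 * (Rl * / (10 * INR nmax * t0 + 1)))) with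
      (Rl * (INR nmax * t0 / (10 * INR nmax * t0 + 1))) by (field; nra).
    assert (INR nmax * t0 / (10 * INR nmax * t0 + 1) <= / 10).
    { apply (Rmult_le_reg_r (10 * INR nmax * t0 + 1)); [nra|].
      unfold Rdiv. rewrite Rmult_assoc, Rinv_l by nra. nra. }
    nra. }
  assert (Hb2 : INR nmax * (Rl / (C * X) * K) = Rl / 10).
  { unfold X. field. repeat split; lra. }
  assert (HSA : Sg A >= 3 / 4 * Rl).
  { assert (0 < eps * Rl) by nra.
    assert (eps * Rl <= / 1000 * Rl) by (apply Rmult_le_compat_r; lra).
    assert (INR nmax * lsum (fun q => len (rep q)) L <=
            INR nmax * (t0 * (Rl / R2) + Rl / (C * X) * K)) by (apply Rmult_le_compat_l; lra).
    rewrite Rmult_plus_distr_l in H1. lra. }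
  exists A, (am A). split; [auto|]. split; [apply Ham; auto|]. split; [|exact HSA].
  pose proof (HS A HAm HnA) as HSA'. fold rep.
  apply Rle_ge.
  apply (Rmult_le_reg_l (INR nmax)); [lra|].
  replace (INR nmax * (/ (32 * INR nmax) * Rl)) with (Rl / 32) by (field; lra).

  change (Jb A (am A)) with (rep A). lra.
Qed.
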